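(* Let $A_1,A_2:\mathbb{R}^n\rightrightarrows\mathbb{R}^n$ be monotone linear relations. Then $q_{A_1}+q_{A_2}=q_{A_1+A_2}$. If in addition $\operatorname{dom}A_1\subseteq\operatorname{dom}A_2$ and $A_1-A_2$ is monotone, then $q_{A_1}-q_{A_2}=q_{A_1-A_2}$.
   Context: A linear relation is an operator whose graph is a linear subspace; monotone means $\langle x^*-y^*,x-y\rangle\ge0$ on the graph. For a monotone linear relation $B$, $q_B(x)=\frac12\langle x,Bx\rangle$ if $x\in\operatorname{dom}B$ (single-valued) and $\infty$ otherwise. $A_1\pm A_2$ are pointwise Minkowski sums/differences with $\operatorname{dom}(A_1\pm A_2)=\operatorname{dom}A_1\cap\operatorname{dom}A_2$. Convention: $\infty-t=\infty$ for real $t$. *)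

(* Defs.v *)
From HB Require Import structures.
From mathcomp Require Import all_boot all_order all_algebra.
From mathcomp Require Import boolp classical_sets reals constructive_ereal.
Set Implicit Arguments. Unset Strict Implicit. Unset Printing Implicit Defensive.
Import Order.TTheory GRing.Theory Num.Theory.
Local Open Scope ring_scope.

(* A set-valued operator R^n ⇉ R^n, given by its graph: B x y  <->  y ∈ B x.
   Vectors of R^n are row vectors 'rV[R]_n. *)
Definition relation (R : realType) (n : nat) := 'rV[R]_n -> 'rV[R]_n -> Prop.

Definition dotv (R : realType) (n : nat) (u v : 'rV[R]_n) : R :=
  \sum_(i < n) u ord0 i * v ord0 i.

Definition linear_relation (R : realType) (n : nat) (B : relation R n) : Prop :=
  [/\ B 0 0,
      (forall x y x' y', B x y -> B x' y' -> B (x + x') (y + y')) &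
      (forall (a : R) x y, B x y -> B (a *: x) (a *: y))].

Definition monotone_rel (R : realType) (n : nat) (B : relation R n) : Prop :=
  forall x xs y ys, B x xs -> B y ys -> 0 <= dotv (xs - ys) (x - y).

Definition dom_rel (R : realType) (n : nat) (B : relation R n) : set 'rV[R]_n :=
  [set x | exists y, B x y].

Definition rel_add (R : realType) (n : nat) (A1 A2 : relation R n) : relation R n :=
  fun x z => exists y1 y2, [/\ A1 x y1, A2 x y2 & z = y1 + y2].
Definition rel_sub (R : realType) (n : nat) (A1 A2 : relation R n) : relation R n :=
  fun x z => exists y1 y2, [/\ A1 x y1, A2 x y2 & z = y1 - y2].

(* q_B x = 1/2 <x, Bx> on dom B (for any chosen element of Bx; for monotone
   linear B this value does not depend on the choice), +oo otherwise *)
Definition qform (R : realType) (n : nat) (B : relation R n) (x : 'rV[R]_n) : \bar R :=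
  match pselect (exists y, B x y) with
  | left h => ((1/2) * dotv x (projT1 (cid h)))%:E
  | right _ => +oo%E
  end.

(* difference of extended-real-valued functions with convention oo - t = oo
   (and, when the subtrahend is infinite, the result is +oo) *)
Definition esub_conv (R : realType) (a b : \bar R) : \bar R :=
  match b with
  | EFin t => adde a (oppe t%:E)
  | _ => +oo%E
  end.

(* Main.v *)
Require Import Defs.
From mathcomp Require Import all_boot all_order all_algebra.
From mathcomp Require Import boolp classical_sets reals constructive_ereal.
Import Order.TTheory GRing.Theory Num.Theory.
Local Open Scope ring_scope.

Section Aux.
Variables (R : realType) (n : nat).
Implicit Types (u v w : 'rV[R]_n).

Lemma dotvDr u v w : dotv u (v + w) = dotv u v + dotv u w.
Proof. by rewrite /dotv -big_split; apply: eq_bigr => i _; rewrite mxE mulrDr. Qed.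

Lemma dotvZr u (a : R) v : dotv u (a *: v) = a * dotv u v.
Proof. by rewrite /dotv mulr_sumr; apply: eq_bigr => i _; rewrite mxE mulrCA. Qed.

Lemma dotvNr u v : dotv u (- v) = - dotv u v.
Proof. by rewrite /dotv -sumrN; apply: eq_bigr => i _; rewrite mxE mulrN. Qed.

Lemma dotvC u v : dotv u v = dotv v u.
Proof. by rewrite /dotv; apply: eq_bigr => i _; rewrite mulrC. Qed.

Lemma dotvBr u v w : dotv u (v - w) = dotv u v - dotv u w.
Proof. by rewrite dotvDr dotvNr. Qed.

Lemma key (B : relation R n) x y y' :
  linear_relation B -> monotone_rel B -> B x y -> B x y' -> dotv x y = dotv x y'.
Proof.
move=> [B0 BD BZ] Bm hy hy'.
have hz : B 0 (y - y').
  have := BD _ _ _ _ hy (BZ (-1) _ _ hy').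
  by rewrite !scaleN1r subrr.
set z := y - y' in hz.
have ht : forall t : R, t * dotv z x <= dotv y x.
  move=> t; have := Bm _ _ _ _ (BZ t _ _ hz) hy.
  rewrite scaler0 sub0r dotvNr dotvC dotvBr dotvZr [dotv x z]dotvC [dotv x y]dotvC.
  by rewrite opprB subr_ge0.
have hd : dotv z x = 0.
  apply/eqP; apply/negPn/negP => hne.
  have := ht ((dotv y x + 1) / dotv z x).
  by rewrite mulfVK // gerDl ler10.
by apply/eqP; rewrite -subr_eq0 -dotvBr dotvC hd.
Qed.

End Aux.
Arguments key {R n B x y y'}.

Theorem proposition4p22 (R : realType) (n : nat) (A1 A2 : relation R n) :
  linear_relation A1 -> monotone_rel A1 ->
  linear_relation A2 -> monotone_rel A2 ->
  (forall x, adde (qform A1 x) (qform A2 x) = qform (rel_add A1 A2) x) /\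
  ((dom_rel A1 `<=` dom_rel A2)%classic -> monotone_rel (rel_sub A1 A2) ->
   forall x, esub_conv (qform A1 x) (qform A2 x) = qform (rel_sub A1 A2) x).
Proof.
move=> L1 M1 L2 M2; split; [|move=> _ _]; move=> x; rewrite /qform.
- case: pselect => [h1|h1]; case: pselect => [h2|h2]; case: pselect => [h3|h3] //=.
  + case: (cid h1) => y1 hy1; case: (cid h2) => y2 hy2; case: (cid h3) => z [z1 [z2 [hz1 hz2 hz]]] /=; rewrite hz.
    rewrite /adde /=; congr (_%:E); rewrite -mulrDr dotvDr.
    by rewrite (key L1 M1 hy1 hz1) (key L2 M2 hy2 hz2).
  + exfalso; apply: h3; case: h1 => y1 ?; case: h2 => y2 ?; exists (y1 + y2), y1, y2; by split.
  + by exfalso; apply: h2; case: h3 => z [z1 [z2 [_ ? _]]]; exists z2.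
  + by exfalso; apply: h1; case: h3 => z [z1 [z2 [? _ _]]]; exists z1.
  + by exfalso; apply: h1; case: h3 => z [z1 [z2 [? _ _]]]; exists z1.
- case: pselect => [h1|h1]; case: pselect => [h2|h2]; case: pselect => [h3|h3] //=.
  + case: (cid h1) => y1 hy1; case: (cid h2) => y2 hy2; case: (cid h3) => z [z1 [z2 [hz1 hz2 hz]]] /=; rewrite hz.
    rewrite /adde /=; congr (_%:E); rewrite -mulrBr dotvBr.
    by rewrite (key L1 M1 hy1 hz1) (key L2 M2 hy2 hz2).
  + exfalso; apply: h3; case: h1 => y1 ?; case: h2 => y2 ?; exists (y1 - y2), y1, y2; by split.
  + by exfalso; apply: h2; case: h3 => z [z1 [z2 [_ ? _]]]; exists z2.
  + by exfalso; apply: h1; case: h3 => z [z1 [z2 [? _ _]]]; exists z1.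
  + by exfalso; apply: h1; case: h3 => z [z1 [z2 [? _ _]]]; exists z1.
Qed.
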